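(* Let $f_\theta$ be any map that assigns to each integer linear program $\min_{\mathbf{x}}\{\mathbf{c}^\top\mathbf{x}\mid \mathbf{A}\mathbf{x}\le\mathbf{b},\ \mathbf{x}\in\mathbb{Z}^n\}$ (given via its bipartite representation $\mathcal{A}=\begin{bmatrix}\mathbf{A}&\mathbf{b}\\ \mathbf{c}^\top&0\end{bmatrix}\in\mathbb{R}^{(m+1)\times(n+1)}$) a vector $f_\theta(\mathcal{A})\in\mathbb{R}^n$, and which satisfies $f_\theta(\pi^c(\mathcal{A}))=\pi^v(f_\theta(\mathcal{A}))$ for all $\pi\in S_n$ and $f_\theta(\sigma^r(\mathcal{A}))=f_\theta(\mathcal{A})$ for all $\sigma\in S_m$. Then $f_\theta$ cannot always correctly predict an optimal solution of ILP instances with formulation symmetries: there exists an ILP instance possessing a nontrivial formulation symmetry such that $f_\theta(\mathcal{A})$ is not an optimal solution of that instance.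
   Context: $S_n$ is the set of permutations of $\{1,\dots,n\}$. For $\pi\in S_n$: $\pi^v(\mathbf{y})=[y_{\pi(1)},\dots,y_{\pi(n)},y_{n+1},\dots]^\top$ permutes the top-most $n$ entries of a vector; $\pi^r$ permutes the top-most $n$ rows of a matrix as $[\mathbf{X}_{\pi(1),:},\dots,\mathbf{X}_{\pi(n),:},\mathbf{X}_{n+1,:},\dots]^\top$; $\pi^c$ permutes the left-most $n$ columns as $[\mathbf{X}_{:,\pi(1)},\dots,\mathbf{X}_{:,\pi(n)},\mathbf{X}_{:,n+1},\dots]$; analogously for $\sigma\in S_m$. A permutation $\pi\in S_n$ is a formulation symmetry of the ILP if there exists $\sigma\in S_m$ with $\pi^v(\mathbf{c})=\mathbf{c}$, $\sigma^v(\mathbf{b})=\mathbf{b}$, and $A_{\sigma(i),\pi(j)}=A_{i,j}$ for all $i,j$. *)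

(* Defs.v *)
From HB Require Import structures.
From mathcomp Require Import all_boot all_order all_algebra all_fingroup.
From mathcomp Require Import reals.
Set Implicit Arguments. Unset Strict Implicit. Unset Printing Implicit Defensive.
Import Order.TTheory GRing.Theory Num.Theory.
Local Open Scope ring_scope.

Section ILP.
Variable R : realType.

Definition ext_perm (k : nat) (p : 'S_k) (j : 'I_k.+1) : 'I_k.+1 :=
  if (insub (val j) : option 'I_k) is Some j' then widen_ord (leqnSn k) (p j')
  else j.

Definition colperm m n (p : 'S_n) (M : 'M[R]_(m.+1, n.+1)) : 'M[R]_(m.+1, n.+1) :=
  \matrix_(i, j) M i (ext_perm p j).

Definition rowperm m n (s : 'S_m) (M : 'M[R]_(m.+1, n.+1)) : 'M[R]_(m.+1, n.+1) :=
  \matrix_(i, j) M (ext_perm s i) j.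

Definition vperm n (p : 'S_n) (y : 'cV[R]_n) : 'cV[R]_n :=
  \col_i y (p i) 0.

Definition ilp_rep m n (A : 'M[R]_(m, n)) (b : 'cV[R]_m) (c : 'cV[R]_n)
  : 'M[R]_(m.+1, n.+1) :=
  \matrix_(i, j)
    match (insub (val i) : option 'I_m), (insub (val j) : option 'I_n) with
    | Some i', Some j' => A i' j'
    | Some i', None => b i' 0
    | None, Some j' => c j' 0
    | None, None => 0
    end.

Definition ilp_feasible m n (A : 'M[R]_(m, n)) (b : 'cV[R]_m) (x : 'cV[R]_n) :=
  (forall j, x j 0 \is a Num.int) /\
  (forall i, \sum_j A i j * x j 0 <= b i 0).

Definition ilp_obj n (c : 'cV[R]_n) (x : 'cV[R]_n) := \sum_j c j 0 * x j 0.

Definition ilp_optimal m n (A : 'M[R]_(m, n)) (b : 'cV[R]_m) (c : 'cV[R]_n)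
  (x : 'cV[R]_n) :=
  ilp_feasible A b x /\
  (forall y, ilp_feasible A b y -> ilp_obj c x <= ilp_obj c y).

Definition formulation_symmetry m n (A : 'M[R]_(m, n)) (b : 'cV[R]_m)
  (c : 'cV[R]_n) (p : 'S_n) :=
  exists s : 'S_m,
    vperm p c = c /\ vperm s b = b /\ (forall i j, A (s i) (p j) = A i j).

End ILP.

(* Main.v *)
Require Import Defs.
From HB Require Import structures.
From mathcomp Require Import all_boot all_order all_algebra all_fingroup.
From mathcomp Require Import reals.
From mathcomp Require Import zify lra.
Import Order.TTheory GRing.Theory Num.Theory.
Local Open Scope ring_scope.

Lemma ext_lt k (p : 'S_k) (j : 'I_k.+1) : (val (ext_perm p j) < k)%N = (val j < k)%N.
Proof.
rewrite /ext_perm; case: insubP => [j' lt _ | nlt] //=.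
by rewrite ltn_ord lt.
Qed.

Theorem corollary1 (R : realType)
  (f : forall m n : nat, 'M[R]_(m.+1, n.+1) -> 'cV[R]_n)
  (f_col : forall m n (p : 'S_n) (M : 'M[R]_(m.+1, n.+1)),
      f m n (colperm p M) = vperm p (f m n M))
  (f_row : forall m n (s : 'S_m) (M : 'M[R]_(m.+1, n.+1)),
      f m n (rowperm s M) = f m n M) :
  exists m n (A : 'M[R]_(m, n)) (b : 'cV[R]_m) (c : 'cV[R]_n) (p : 'S_n),
    [/\ p != 1%g, formulation_symmetry A b c p,
        (exists x, ilp_optimal A b c x) &
        ~ ilp_optimal A b c (f m n (ilp_rep A b c))].
Proof.
pose A : 'M[R]_(1, 2) := const_mx 1.
pose b : 'cV[R]_1 := const_mx 1.
pose c : 'cV[R]_2 := const_mx (-1).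
pose p : 'S_2 := tperm ord0 ord_max.
exists 1%N, 2%N, A, b, c, p; split.
- apply/eqP => /(congr1 (fun q : 'S_2 => q ord0)).
  by rewrite tpermL perm1.
- exists 1%g; split; [|split].
  + by rewrite /vperm; apply/matrixP => i j; rewrite !mxE.
  + by rewrite /vperm; apply/matrixP => i j; rewrite !mxE.
  + by move=> i j; rewrite !mxE.
- exists (\col_i (if val i == 0%N then 1 else 0)); split; first split.
  + move=> j; rewrite !mxE; case: ifP => _; [exact: rpred1 | exact: rpred0].
  + move=> i; rewrite !big_ord_recl big_ord0 !mxE /=.
    by rewrite !mul1r addr0 addr0.
  + move=> y [_ Hy]; move: (Hy ord0).
    rewrite /ilp_obj !big_ord_recl !big_ord0 !mxE /= !mul1r !addr0.
    move=> H; lra.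
- set M := ilp_rep A b c.
  have HM : colperm p M = M.
    apply/matrixP => i j; rewrite !mxE.
    case: insubP => [i' _ _|_]; case: insubP => [j1 Hj1 _|Hj1];
      case: insubP => [j2 Hj2 _|Hj2]; rewrite ?mxE //. idtac.
    1,2: by move: Hj1 Hj2; rewrite ext_lt; case: (val j < 2)%N.
  have Heq : f 1%N 2%N M ord0 0 = f 1%N 2%N M ord_max 0.
    by rewrite -{1}HM f_col mxE tpermL.
  move=> [[Hint Hfeas] Hopt].
  set x := f 1%N 2%N M in Heq Hint Hfeas Hopt.
  pose y : 'cV[R]_2 := \col_i (if val i == 0%N then 1 else 0).
  have Hy : ilp_feasible A b y.
    split.
    + move=> j; rewrite !mxE; case: ifP => _; [exact: rpred1 | exact: rpred0].
    + move=> i; rewrite !big_ord_recl big_ord0 !mxE /=.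
      by rewrite !mul1r addr0 addr0.
  move: (Hopt y Hy) (Hfeas ord0).
  rewrite /ilp_obj !big_ord_recl !big_ord0 !mxE /= !mul1r !addr0.
  have -> : (lift ord0 ord0 : 'I_2) = ord_max by apply/val_inj.
  rewrite -Heq.
  case/intrP: (Hint ord0) => z -> H1 H2.
  have H3 : (1%:~R : R) <= (2 * z)%:~R by rewrite intrM; lra.
  have H4 : ((2 * z)%:~R : R) <= 1%:~R by rewrite intrM; lra.
  rewrite ler_int in H3; rewrite ler_int in H4; lia.
Qed.
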